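(* Let $M$ be an Artinian $R$-module. If $M$ is an $M$-prime module, then $M$ is a homogeneous semisimple module, i.e. a direct sum of pairwise isomorphic simple modules.
   Context: $R$ is a ring with identity, modules are unital left $R$-modules. For $N\le M$ and a module $X$, $N\cdot X$ is the intersection of the kernels of all homomorphisms $X\to W$ where $W$ ranges over modules with $f(N)=0$ for all $f\in\mathrm{Hom}_R(M,W)$ (for $Y\le X$, $N\cdot Y$ is formed regarding $Y$ as a module). A module $X\neq0$ is an $M$-prime module if for all submodules $N\le M$ and $Y\le X$, $N\cdot Y=0$ implies $N\cdot X=0$ or $Y=0$. *)

(* Defs.v *)
From HB Require Import structures.
From Stdlib Require List.
From mathcomp Require Import all_boot all_order all_algebra.
Set Implicit Arguments. Unset Strict Implicit. Unset Printing Implicit Defensive.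
Import GRing.Theory.
Local Open Scope ring_scope.

Section ModuleDefs.
Variable R : pzRingType.

Definition is_submod (M : lmodType R) (S : M -> Prop) : Prop :=
  [/\ S 0, (forall x y, S x -> S y -> S (x + y)) & (forall (a : R) x, S x -> S (a *: x))].

(* g : X -> W restricted to the submodule Y is an R-module homomorphism Y -> W.
   (Homomorphisms out of the module Y are represented by functions on X whose
   restriction to Y is R-linear; values outside Y are irrelevant.) *)
Definition hom_on (X W : lmodType R) (Y : X -> Prop) (g : X -> W) : Prop :=
  forall (a : R) x y, Y x -> Y y -> g (a *: x + y) = a *: g x + g y.

Definition kills (M : lmodType R) (N : M -> Prop) (W : lmodType R) : Prop :=
  forall f : M -> W, hom_on (fun _ => True) f -> forall x, N x -> f x = 0.

(* N . Y  (for Y a submodule of X, regarded as a module): the intersection of the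
   kernels of all homomorphisms Y -> W, W ranging over modules killed (via Hom(M,W))
   by N. *)
Definition modprod (M : lmodType R) (N : M -> Prop) (X : lmodType R) (Y : X -> Prop)
  : X -> Prop :=
  fun x => Y x /\ forall W : lmodType R, kills N W ->
             forall g : X -> W, hom_on Y g -> g x = 0.

Definition is_zero (X : lmodType R) (S : X -> Prop) : Prop := forall x, S x -> x = 0.

Definition Mprime (M X : lmodType R) : Prop :=
  (exists x : X, x <> 0) /\
  forall (N : M -> Prop) (Y : X -> Prop), is_submod N -> is_submod Y ->
    is_zero (modprod N Y) -> is_zero (modprod N (fun _ : X => True)) \/ is_zero Y.

Definition artinian (M : lmodType R) : Prop :=
  forall S : nat -> M -> Prop, (forall n, is_submod (S n)) ->
    (forall n x, S n.+1 x -> S n x) ->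
    exists n, forall m, (n <= m)%N -> forall x, S m x <-> S n x.

Definition simple_submod (M : lmodType R) (Y : M -> Prop) : Prop :=
  is_submod Y /\ (exists y, Y y /\ y <> 0) /\
  forall Z : M -> Prop, is_submod Z -> (forall z, Z z -> Y z) ->
    is_zero Z \/ (forall z, Y z -> Z z).

Definition iso_submod (M : lmodType R) (Y1 Y2 : M -> Prop) : Prop :=
  exists g : M -> M, [/\ hom_on Y1 g, (forall x, Y1 x -> Y2 (g x)),
    (forall x y, Y1 x -> Y1 y -> g x = g y -> x = y) &
    (forall z, Y2 z -> exists x, Y1 x /\ g x = z)].

Definition in_sum (M : lmodType R) (I : Type) (P : I -> Prop) (Y : I -> M -> Prop)
  (x : M) : Prop :=
  exists s : seq (I * M), (forall p, List.In p s -> P p.1 /\ Y p.1 p.2) /\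
    x = \sum_(p <- s) p.2.

Definition direct_sum (M : lmodType R) (I : Type) (Y : I -> M -> Prop) : Prop :=
  (forall i, is_submod (Y i)) /\
  (forall x, in_sum (fun _ => True) Y x) /\
  (forall i x, Y i x -> in_sum (fun j => j <> i) Y x -> x = 0).

Definition homogeneous_semisimple (M : lmodType R) : Prop :=
  exists (I : Type) (Y : I -> M -> Prop), direct_sum Y /\
    (forall i, simple_submod (Y i)) /\ (forall i j, iso_submod (Y i) (Y j)).

End ModuleDefs.

(* Main.v *)
From HB Require Import structures.
From mathcomp Require Import all_boot all_order all_algebra.
From mathcomp Require Import boolp zify.
Require Import Defs.
Set Implicit Arguments. Unset Strict Implicit. Unset Printing Implicit Defensive.
Import GRing.Theory.
Local Open Scope ring_scope.

Section Sub.
Variable R : pzRingType.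
Variable M : lmodType R.
Variable Y : M -> Prop.
Hypothesis HY : is_submod Y.

Definition subm := {x : M | `[< Y x >]}.
HB.instance Definition _ := Choice.on subm.


Lemma Y0 : `[< Y 0 >]. Proof. by apply/asboolP; case: HY. Qed.
Lemma YD (x y : subm) : `[< Y (val x + val y) >].
Proof. case: x => x Hx; case: y => y Hy /=; move/asboolP: Hx => Hx; move/asboolP: Hy => Hy; apply/asboolP; case: HY => _ H _; exact: H. Qed.
Lemma YZ a (x : subm) : `[< Y (a *: val x) >].
Proof. case: x => x Hx /=; move/asboolP: Hx => Hx; apply/asboolP; case: HY => _ _ H; exact: H. Qed.
Lemma YN (x : subm) : `[< Y (- val x) >].
Proof. rewrite -scaleN1r; exact: YZ. Qed.

Definition s0 : subm := exist (fun x : M => `[< Y x >]) 0 Y0.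
Definition sadd (x y : subm) : subm := exist (fun x : M => `[< Y x >]) _ (YD x y).
Definition sopp (x : subm) : subm := exist (fun x : M => `[< Y x >]) _ (YN x).
Definition sscale a (x : subm) : subm := exist (fun x : M => `[< Y x >]) _ (YZ a x).

Lemma saddA : associative sadd. Proof. by move=> x y z; apply: val_inj; rewrite /= addrA. Qed.
Lemma saddC : commutative sadd. Proof. by move=> x y; apply: val_inj; rewrite /= addrC. Qed.
Lemma sadd0 : left_id s0 sadd. Proof. by move=> x; apply: val_inj; rewrite /= add0r. Qed.
Lemma saddN : left_inverse s0 sopp sadd. Proof. by move=> x; apply: val_inj; rewrite /= addNr. Qed.
HB.instance Definition _ := GRing.isZmodule.Build subm saddA saddC sadd0 saddN.
Lemma sscaleA a b v : sscale a (sscale b v) = sscale (a * b) v.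
Proof. by apply: val_inj; rewrite /= scalerA. Qed.
Lemma sscale1 : left_id 1 sscale. Proof. by move=> x; apply: val_inj; rewrite /= scale1r. Qed.
Lemma sscaleDr : right_distributive sscale +%R.
Proof. by move=> a x y; apply: val_inj; rewrite /= scalerDr. Qed.
Lemma sscaleDl v : {morph sscale^~ v: a b / a + b}.
Proof. by move=> a b; apply: val_inj; rewrite /= scalerDl. Qed.
HB.instance Definition _ := GRing.Zmodule_isLmodule.Build R subm sscaleA sscale1 sscaleDr sscaleDl.

Definition subL : lmodType R := subm.
Lemma val_add (x y : subL) : val (x + y) = val x + val y. Proof. by []. Qed.
Lemma val_scale a (x : subL) : val (a *: x) = a *: val x. Proof. by []. Qed.
Lemma val_zero : val (0 : subL) = 0. Proof. by []. Qed.
Definition inS (m : M) : subL :=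
  match pselect (Y m) with
  | left p => exist (fun x : M => `[< Y x >]) m (asboolT p)
  | right _ => 0
  end.
Lemma val_inS m : Y m -> val (inS m) = m.
Proof. by rewrite /inS; case: pselect. Qed.
Lemma valY (x : subL) : Y (val x).
Proof. by case: x => x /= /asboolP. Qed.
End Sub.

Section Main.
Variable R : pzRingType.
Variable M : lmodType R.
Hypothesis art : artinian M.
Hypothesis pr : Mprime M M.

Definition lin (f : M -> M) := hom_on (fun _ => True) f.

Section Lin.
Variable f : M -> M.
Hypothesis hf : lin f.
Lemma f0 : f 0 = 0.
Proof.
have h := @hf 1 0 0 I I; rewrite scaler0 addr0 scale1r in h.
have : f 0 + f 0 = f 0 + 0 by rewrite addr0 -h.
by move/addrI.
Qed.
Lemma fD x y : f (x + y) = f x + f y.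
Proof. by have := @hf 1 x y I I; rewrite !scale1r. Qed.
Lemma fZ a x : f (a *: x) = a *: f x.
Proof. by have := @hf a x 0 I I; rewrite !addr0 f0 addr0. Qed.
Lemma fN x : f (- x) = - f x.
Proof. by rewrite -scaleN1r fZ scaleN1r. Qed.
Lemma fB x y : f (x - y) = f x - f y.
Proof. by rewrite fD fN. Qed.
Lemma fsum (I : Type) (s : seq I) (G : I -> M) :
  f (\sum_(p <- s) G p) = \sum_(p <- s) f (G p).
Proof. exact: (big_morph f fD f0). Qed.
End Lin.

Section Subm.
Variable Y : M -> Prop.
Hypothesis HY : is_submod Y.
Lemma sub0 : Y 0. Proof. by case: HY. Qed.
Lemma subD x y : Y x -> Y y -> Y (x + y). Proof. by case: HY => _ H _; apply: H. Qed.
Lemma subZ a x : Y x -> Y (a *: x). Proof. by case: HY => _ _ H; apply: H. Qed.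
Lemma subN x : Y x -> Y (- x). Proof. by rewrite -scaleN1r; apply: subZ. Qed.
Lemma subB x y : Y x -> Y y -> Y (x - y). Proof. by move=> hx hy; apply: subD => //; apply: subN. Qed.
End Subm.

Lemma minimal (P : (M -> Prop) -> Prop) :
  (forall Z, P Z -> is_submod Z) -> (exists Z, P Z) ->
  exists Z, P Z /\ forall Z', P Z' -> (forall x, Z' x -> Z x) -> forall x, Z x -> Z' x.
Proof.
move=> Psub [Z0 PZ0]; apply: contrapT => H.
have step : forall Zs : {Z | P Z}, exists Zs' : {Z | P Z},
    (forall x, sval Zs' x -> sval Zs x) /\ exists x, sval Zs x /\ ~ sval Zs' x.
  move=> [Z PZ]; apply: contrapT => nE; apply: H; exists Z; split => // Z' PZ' sub x Zx.
  apply: contrapT => nZ'x; apply: nE; exists (exist _ Z' PZ'); split => //; by exists x.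
have [g hg] := choice step.
pose S n := sval (iter n g (exist _ Z0 PZ0)).
have hsub : forall n, is_submod (S n).
  by move=> n; apply: Psub; exact: (svalP (iter n g _)).
have hdesc : forall n x, S n.+1 x -> S n x.
  by move=> n x; rewrite /S iterS; case: (hg (iter n g (exist _ Z0 PZ0))) => h _; apply: h.
have [n hn] := art hsub hdesc.
have [_ [x [Snx nS]]] := hg (iter n g (exist _ Z0 PZ0)).
by apply: nS; rewrite -iterS; apply/(hn n.+1 (leqnSn n)).
Qed.

Definition Pnz (Z : M -> Prop) := is_submod Z /\ exists z, Z z /\ z <> 0.

Lemma exS : exists S, Pnz S /\
  forall Z', Pnz Z' -> (forall x, Z' x -> S x) -> forall x, S x -> Z' x.
Proof.
apply: minimal; first by move=> Z [].
case: pr => [[x nx] _]; exists (fun _ => True); split; last by exists x.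
by split.
Qed.

Section WithS.
Variable S : M -> Prop.
Hypothesis PS : Pnz S.
Hypothesis minS : forall Z', Pnz Z' -> (forall x, Z' x -> S x) -> forall x, S x -> Z' x.
Definition good f := lin f /\ forall x, S (f x).

Lemma key K : is_submod K -> (exists k, K k /\ k <> 0) ->
  exists f, good f /\ exists k, K k /\ f k <> 0.
Proof.
move=> HK [k0 [Kk0 nk0]]; apply: contrapT => nE.
have hK : forall f, good f -> forall k, K k -> f k = 0.
  move=> f gf k Kk; apply: contrapT => nfk; apply: nE; exists f; split=> //; by exists k.
have HS := proj1 PS.
have hz : is_zero (modprod K S).
  move=> x [Sx Hx].
  have kW : kills K (subL HS).
    move=> h hh k Kk; apply: val_inj; rewrite val_zero.
    apply: (hK (fun m => val (h m))) => //; split; last by move=> m; apply: valY.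
    by move=> a y z _ _ /=; rewrite (hh a y z I I) val_add val_scale.
  have hg : hom_on S (inS HS).
    move=> a y z Sy Sz; apply: val_inj; rewrite val_add val_scale !val_inS //.
    by apply: subD => //; apply: subZ.
  by have := Hx _ kW _ hg; move/(congr1 val); rewrite val_zero val_inS.
case: (proj2 pr K S HK HS hz) => [hz1 | hz2].
  by apply: nk0; apply: hz1; split=> // W kW g hg; exact: kW g hg k0 Kk0.
by case: PS => _ [z [Sz nz]]; exact: nz (hz2 z Sz).
Qed.

Definition goodF n (F : nat -> M -> M) := forall j, (j < n)%N -> good (F j).
Definition Kf n (F : nat -> M -> M) x := forall j, (j < n)%N -> F j x = 0.

Lemma Kf_sub n F : goodF n F -> is_submod (Kf n F).
Proof.
move=> gF; split.
- by move=> j lj; case: (gF j lj) => lf _; apply: (f0 lf).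
- by move=> x y hx hy j lj; case: (gF j lj) => lf _; rewrite (fD lf) hx ?hy ?addr0.
- by move=> a x hx j lj; case: (gF j lj) => lf _; rewrite (fZ lf) hx ?scaler0.
Qed.

Lemma exK0 : exists n F, goodF n F /\ is_zero (Kf n F).
Proof.
pose P Z := exists n F, goodF n F /\ Z = Kf n F.
have h1 : forall Z, P Z -> is_submod Z by move=> Z [n [F [gF ->]]]; apply: Kf_sub.
have h2 : exists Z, P Z.
  by exists (Kf 0 (fun _ => id)), 0, (fun _ => id); split.
have [Z [[n [F [gF ->]]] minZ]] := minimal h1 h2.
exists n, F; split => // x Kx; apply: contrapT => nx.
have [f [[lf Sf] [k [Kk fk]]]] := key (Kf_sub gF) (ex_intro _ x (conj Kx nx)).
pose F' j := if j is j'.+1 then F j' else f.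
have gF' : goodF n.+1 F' by case=> [|j] lj /=; [split | apply: gF].
have sub : forall y, Kf n.+1 F' y -> Kf n F y by move=> y hy j lj; exact: (hy j.+1 lj).
apply: fk; exact: (minZ _ (ex_intro _ n.+1 (ex_intro _ F' (conj gF' erefl))) sub k Kk 0 isT).
Qed.

Lemma exKmin : exists n F, goodF n F /\ is_zero (Kf n F) /\
  forall m G, goodF m G -> is_zero (Kf m G) -> (n <= m)%N.
Proof.
have [n0 [F0 h0]] := exK0.
have exP : exists n, `[< exists F, goodF n F /\ is_zero (Kf n F) >].
  by exists n0; apply/asboolP; exists F0.
case: (ex_minnP exP) => n /asboolP [F [gF zF]] mn.
exists n, F; do 2 split => //.
by move=> m G gG zG; apply: mn; apply/asboolP; exists G.
Qed.

Section Decomp.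
Variable n : nat.
Variable F : nat -> M -> M.
Hypothesis gF : goodF n F.
Hypothesis zF : is_zero (Kf n F).
Hypothesis mnF : forall m G, goodF m G -> is_zero (Kf m G) -> (n <= m)%N.

Definition Yd (i : nat) x := forall j, (j < n)%N -> j != i -> F j x = 0.

Lemma Y_nz i : (i < n)%N -> exists y, Yd i y /\ y <> 0.
Proof.
move=> li; apply: contrapT => nE.
pose G j := if (j < i)%N then F j else F j.+1.
have gG : goodF n.-1 G.
  by move=> j lj; rewrite /G; case: ifP => hj; apply: gF; lia.
have zG : is_zero (Kf n.-1 G).
  move=> x Kx; apply: contrapT => nx; apply: nE; exists x; split => // j lj nji.
  case: (ltnP j i) => hji.
    by have := Kx j ltac:(lia); rewrite /G hji.
  have hj : (i < j)%N by rewrite ltn_neqAle eq_sym nji hji.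
  have := Kx j.-1 ltac:(lia); rewrite /G.
  have -> : (j.-1 < i)%N = false by lia.
  by have -> : j.-1.+1 = j by lia.
by have := @mnF _ _ gG zG; lia.
Qed.

Lemma YK i x : (i < n)%N -> Yd i x -> F i x = 0 -> x = 0.
Proof.
move=> li hY hF; apply: zF => j lj; case: (eqVneq j i) => [-> // | ne]; exact: hY j lj ne.
Qed.

Lemma Ysub i : (i < n)%N -> is_submod (Yd i).
Proof.
move=> li; split.
- by move=> j lj _; case: (@gF j lj) => lf _; apply: (f0 lf).
- by move=> x y hx hy j lj ne; case: (@gF j lj) => lf _; rewrite (fD lf) hx ?hy ?addr0.
- by move=> a x hx j lj ne; case: (@gF j lj) => lf _; rewrite (fZ lf) hx ?scaler0.
Qed.

Lemma Yuniq i u v : (i < n)%N -> Yd i u -> Yd i v -> F i u = F i v -> u = v.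
Proof.
move=> li hu hv e; have [lf _] := @gF i li.
apply/eqP; rewrite -subr_eq0; apply/eqP; apply: (YK li).
  exact: (@subB _ (Ysub li) _ _ hu hv).
by rewrite (fB lf) e subrr.
Qed.

Lemma Ysurj_sub i Z : (i < n)%N -> is_submod Z -> (forall z, Z z -> Yd i z) ->
  (exists z, Z z /\ z <> 0) -> forall s, S s -> exists x, Z x /\ F i x = s.
Proof.
move=> li HZ ZY [z [Zz nz]] s Ss.
have [lf Sf] := @gF i li.
pose T s := exists x, Z x /\ F i x = s.
have PT : Pnz T.
  split; first split.
  - by exists 0; split; [exact: (@sub0 _ HZ) | exact: f0 lf].
  - move=> _ _ [x [Zx <-]] [y [Zy <-]]; exists (x + y); split; [exact: subD | exact: fD].
  - move=> a _ [x [Zx <-]]; exists (a *: x); split; [exact: subZ | exact: fZ].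
  exists (F i z); split; first by exists z.
  by move=> e; apply: nz; apply: (YK li (ZY _ Zz) e).
have TS : forall t, T t -> S t by move=> _ [x [_ <-]]; apply: Sf.
exact: minS PT TS s Ss.
Qed.

Lemma Ysurj i : (i < n)%N -> forall s, S s -> exists x, Yd i x /\ F i x = s.
Proof. by move=> li; apply: Ysurj_sub => //; [apply: Ysub | apply: Y_nz]. Qed.

Lemma Ysimple i : (i < n)%N -> simple_submod (Yd i).
Proof.
move=> li; split; first exact: Ysub.
split; first exact: Y_nz.
move=> Z HZ ZY; case: (pselect (is_zero Z)) => [|nz]; [by left | right].
have ex : exists z, Z z /\ z <> 0.
  apply: contrapT => nE; apply: nz => z Zz; apply: contrapT => nz0; apply: nE; by exists z.
move=> y Yy; have [lf Sf] := @gF i li.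
have [z [Zz e]] := Ysurj_sub li HZ ZY ex (Sf y).
by rewrite -(Yuniq li (ZY _ Zz) Yy e).
Qed.

Lemma Yiso i j : (i < n)%N -> (j < n)%N -> iso_submod (Yd i) (Yd j).
Proof.
move=> li lj.
have [lfi Sfi] := @gF i li; have [lfj Sfj] := @gF j lj.
have [g hg] := choice (fun x => Ysurj lj (Sfi x)).
exists g; split.
- move=> a x y _ _; apply: (Yuniq lj (proj1 (hg _))).
    exact: (@subD _ (Ysub lj) _ _ (@subZ _ (Ysub lj) _ _ (proj1 (hg x))) (proj1 (hg y))).
  by rewrite (fD lfj) (fZ lfj) !(proj2 (hg _)) (fD lfi) (fZ lfi).
- by move=> x _; exact: (proj1 (hg x)).
- move=> x y Yx Yy e; apply: (Yuniq li Yx Yy).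
  by rewrite -(proj2 (hg x)) -(proj2 (hg y)) e.
- move=> z Yz; have [x [Yx e]] := Ysurj li (Sfj z); exists x; split => //.
  by apply: (Yuniq lj (proj1 (hg x)) Yz); rewrite (proj2 (hg x)) e.
Qed.

Lemma dsum : direct_sum (fun i : 'I_n => Yd i).
Proof.
split; first by move=> i; apply: Ysub.
split.
- move=> x.
  have [e he] := choice (fun i : 'I_n => Ysurj (ltn_ord i) (proj2 (@gF i (ltn_ord i)) x)).
  exists [seq (i, e i) | i <- index_enum 'I_n]; split.
    move=> p; elim: (index_enum 'I_n) => //= a l IH [<-|/IH] //=.
    by split => //; exact: (proj1 (he a)).
  rewrite big_map; apply/eqP; rewrite -subr_eq0; apply/eqP; apply: zF => j lj.
  have [lf _] := @gF j lj.
  rewrite (fB lf) (fsum lf) (bigD1 (Ordinal lj)) //= (proj2 (he (Ordinal lj))) /= big1 ?addr0 ?subrr //.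
  move=> i ne; apply: (proj1 (he i)) => //.
  by apply: contra ne => /eqP ei; apply/eqP; apply: val_inj; rewrite /= ei.
- move=> i x Yx [s [hs ex]]; subst x; apply: (YK (ltn_ord i) Yx); clear Yx.
  have [lf _] := @gF i (ltn_ord i).
  rewrite (fsum lf); elim: s hs => [|p s IH] hs; first by rewrite big_nil.
  rewrite big_cons IH; last by move=> q hq; apply: hs; right.
  have [ne Yp] := hs p (or_introl erefl).
  rewrite (Yp i (ltn_ord i)) ?addr0 //.
  by apply/eqP => ei; apply: ne; apply: ord_inj; rewrite ei.
Qed.

Lemma hs : homogeneous_semisimple M.
Proof.
exists 'I_n, (fun i : 'I_n => Yd i); split; first exact: dsum.
split; first by move=> i; apply: Ysimple.
by move=> i j; apply: Yiso.
Qed.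
End Decomp.

Lemma mainS : homogeneous_semisimple M.
Proof. have [n [F [gF [zF mnF]]]] := exKmin; exact: hs gF zF mnF. Qed.

End WithS.

Lemma main : homogeneous_semisimple M.
Proof. have [S [PS minS]] := exS; exact: mainS PS minS. Qed.
End Main.

Theorem proposition5p1 (R : pzRingType) (M : lmodType R) :
  artinian M -> Mprime M M -> homogeneous_semisimple M.
Proof. move=> art pr; exact: main art pr. Qed.
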